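(* Let $\lambda$ be Lebesgue measure on $[0,1)$. For every sequence $(x_n)_{n\ge1}$ in $[0,1)$ and every scale sequence $(s_n)_{n\ge1}$, the function $\omega(x)=\liminf_{n\to\infty} s_n\,|x_n-x|$ satisfies $\omega(x)\in\{0,\infty\}$ for $\lambda$-almost every $x\in[0,1)$. That is, $\lambda$ is decisive.
   Context: A scale sequence is a sequence of positive reals $s_n$ with $s_n\to\infty$. A Borel probability measure $\nu$ on a metric space $(X,d)$ is decisive if for every sequence $(x_n)$ in $X$ and every scale sequence $(s_n)$, the function $\omega(x)=\liminf_n s_n d(x_n,x)$ lies in $\{0,\infty\}$ for $\nu$-a.e. $x$. *)

(* Defs.v *)
From HB Require Import structures.
From mathcomp Require Import all_boot all_order all_algebra.
From mathcomp Require Import all_classical all_reals all_analysis.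
Set Implicit Arguments. Unset Strict Implicit. Unset Printing Implicit Defensive.
Import Order.TTheory GRing.Theory Num.Theory.
Local Open Scope classical_set_scope.
Local Open Scope ring_scope.

Definition scale_seq (R : realType) (s : R^nat) : Prop :=
  (forall n, 0 < s n) /\ s @ \oo --> +oo.

Definition omega (R : realType) (xs s : R^nat) (x : R) : \bar R :=
  limn_einf (fun n => (s n * `|xs n - x|)%:E).

(* Main.v *)
Require Import Defs.
From HB Require Import structures.
From mathcomp Require Import all_boot all_order all_algebra.
From mathcomp Require Import all_classical all_reals all_analysis.
From mathcomp Require Import ring lra.
Import Order.TTheory GRing.Theory Num.Theory numFieldNormedType.Exports.
Local Open Scope classical_set_scope.
Local Open Scope ring_scope.

Section liminf.
Context {R : realType}.
Local Open Scope ereal_scope.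

Lemma limn_einf_supE (u : (\bar R)^nat) :
  limn_einf u = ereal_sup (range (einfs u)).
Proof. by rewrite limn_einf_lim; apply/cvg_lim => //; exact: cvg_einfs_sup. Qed.

Lemma einfs_le_limn_einf (u : (\bar R)^nat) m : einfs u m <= limn_einf u.
Proof. by rewrite limn_einf_supE; apply: ereal_sup_ubound; exists m. Qed.

Lemma limn_einf_lt_io (u : (\bar R)^nat) (M : \bar R) :
  limn_einf u < M -> forall m, exists2 n, (m <= n)%N & u n < M.
Proof.
move=> uM m; have := le_lt_trans (einfs_le_limn_einf u m) uM.
by move=> /ereal_inf_lt[_ [n /= mn <-]] unM; exists n.
Qed.

Lemma limn_einf_gt_ev (u : (\bar R)^nat) (a : \bar R) :
  a < limn_einf u -> exists N, forall n, (N <= n)%N -> a < u n.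
Proof.
rewrite limn_einf_supE => /ereal_sup_gt[_ [N _ <-]] aN.
exists N => n Nn; apply: (lt_le_trans aN).
by apply: ereal_inf_lbound; exists n.
Qed.

Lemma limn_einf_ge0 (u : (\bar R)^nat) : (forall n, 0 <= u n) -> 0 <= limn_einf u.
Proof.
move=> u0; apply: le_trans (einfs_le_limn_einf u 0).
by apply: le_ereal_inf_tmp => _ [n _ <-].
Qed.
End liminf.

Section key.
Context {R : realType}.
Local Notation mu := (@lebesgue_measure R).
Variables (xs s : R^nat).
Hypothesis spos : forall n, 0 < s n.

Definition Gs N (d : R) := [set x : R | forall n, (N <= n)%N -> d <= s n * `|xs n - x|].

Lemma Gs_measurable N d : measurable (Gs N d).
Proof.
have -> : Gs N d = \bigcap_(n in [set n | (N <= n)%N]) ~` ball (xs n) (d / s n).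
  apply/seteqP; split => x /=.
    move=> Gx n Nn; rewrite /ball /=; apply/negP; rewrite -leNgt.
    by rewrite ler_pdivrMr// mulrC; exact: Gx.
  move=> Hx n Nn; have := Hx n Nn; rewrite /ball /= => /negP; rewrite -leNgt.
  by rewrite ler_pdivrMr// mulrC.
apply: bigcap_measurableType => n _; apply: measurableC.
exact: measurable_realfun.measurable_ball.
Qed.

Lemma mu_bound N d x n (M : R) : 0 < d -> d <= M -> (N <= n)%N ->
  s n * `|xs n - x| < M ->
  (mu (Gs N d `&` ball x (2 * M / s n)) <=
    ((2 * M / s n) *+ 2 - (d / s n) *+ 2)%:E)%E.
Proof.
move=> d0 dM Nn xM.
set r := 2 * M / s n; set C := ball (xs n) (d / s n).
have mB : measurable (ball x r) := measurable_realfun.measurable_ball x r.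
have mC : measurable C := measurable_realfun.measurable_ball _ _.
have mGB : measurable (Gs N d `&` ball x r) := measurableI _ _ (Gs_measurable N d) mB.
have CB : C `<=` ball x r.
  move=> y; rewrite /C /ball /= => Cy.
  rewrite (le_lt_trans (ler_distD (xs n) _ _))// distrC.
  have -> : r = M / s n + M / s n by rewrite /r; ring.
  apply: ltr_leD; first by rewrite ltr_pdivlMr// mulrC.
  by rewrite (le_trans (ltW Cy))// ler_pM2r ?invr_gt0.
have dis : (Gs N d `&` ball x r) `&` C = set0.
  apply/seteqP; split => // y [[Gy _]]; rewrite /C /ball /=.
  rewrite ltr_pdivlMr// mulrC => /lt_le_trans/(_ (Gy n Nn)).
  by rewrite ltxx.
have := measureU mu mGB mC dis.
have : (mu (Gs N d `&` ball x r `|` C) <= mu (ball x r))%E.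
  by rewrite le_measure// ?inE//; [exact: measurableU| by move=> y [[_ ?]|/CB]].
move=> + eq; rewrite eq => H.
have r0 : 0 <= r by rewrite /r divr_ge0 ?mulr_ge0 ?(ltW (spos n))// ltW// (lt_le_trans d0).
have ds0 : 0 <= d / s n by rewrite divr_ge0 ?(ltW (spos n)) ?ltW.
have eC : mu C = ((d / s n) *+ 2)%:E by apply: lebesgue_measure_ball.
have eB : mu (ball x r) = (r *+ 2)%:E by apply: lebesgue_measure_ball.
have {}H : (mu (Gs N d `&` ball x r) + ((d / s n) *+ 2)%:E <= (r *+ 2)%:E)%E.
  by rewrite -eC -eB.
by rewrite EFinB leeBrDr.
Qed.

Lemma not_density N d x (M : R) : 0 < d -> s @ \oo --> +oo%R -> Gs N d x ->
  (forall m, exists2 n, (m <= n)%N & s n * `|xs n - x| < M) ->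
  ~ ((mu (Gs N d `&` ball x r) * (mu (ball x r))^-1)%E @[r --> 0^'+]
      --> (\1_(Gs N d) x)%:E).
Proof.
move=> d0 soo Gx io conv.
have [n0 Nn0 Mn0] := io N.
have dM : d < M := le_lt_trans (Gx n0 Nn0) Mn0.
have M0 : 0 < M := lt_trans d0 dM.
rewrite indicE mem_set// in conv.
move/fine_cvgP : conv => [_ conv].
set z := 1 - d / (2 * M).
have z1 : z < 1 by rewrite /z ltrBlDr ltrDl divr_gt0// mulr_gt0.
have := cvgr_gt _ conv _ z1.
rewrite near_withinE => Hn.
have {Hn} := Hn ltac:(exact: _).
case/nbhs_ballP => e /= e0 He.
have [N' _ HN'] := (cvgryPgt s).1 soo (2 * M / e).
have [n Nn xn] := io (maxn N N').
have sn : 2 * M / e < s n by apply: HN'; rewrite /= (leq_trans (leq_maxr _ _) Nn).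
have sn0 := spos n.
set r := 2 * M / s n.
have r0 : 0 < r by rewrite /r divr_gt0// mulr_gt0.
have re : r < e.
  by rewrite /r ltr_pdivrMr// (mulrC e) -(ltr_pdivrMr _ _ e0).
have := He r; rewrite /ball /= sub0r normrN gtr0_norm// => /(_ re r0).
have NN : (N <= n)%N by rewrite (leq_trans (leq_maxl _ _) Nn).
have bnd := @mu_bound N d x n M d0 (ltW dM) NN xn.
rewrite -/r in bnd.
have eB : mu (ball x r) = (r *+ 2)%:E by apply: lebesgue_measure_ball; exact: ltW.
rewrite eB.
have mGB0 : (0 <= mu (Gs N d `&` ball x r))%E by exact: measure_ge0.
have fin : mu (Gs N d `&` ball x r) \is a fin_num.
  by rewrite ge0_fin_numE// (le_lt_trans bnd)// ltry.
rewrite -(fineK fin) inver mulrn_eq0 /= gt_eqF//=.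
move: bnd mGB0; rewrite -(fineK fin) !lee_fin.
set m := fine _ => bnd m0.
apply/negP; rewrite -leNgt.
rewrite ler_pdivrMr ?mulrn_wgt0//.
rewrite /z (le_trans bnd)// le_eqVlt; apply/orP; left; apply/eqP.
rewrite /r !mulr2n; field.
by rewrite (gt_eqF sn0) (gt_eqF M0).
Qed.
End key.

Theorem proposition5p2 (R : realType) (xs s : R^nat) :
  (forall n, xs n \in `[0, 1[) -> scale_seq s ->
  (@lebesgue_measure R).-negligible
    ([set x | x \in `[0, 1[] `&`
     [set x | omega xs s x <> 0%E /\ omega xs s x <> +oo%E]).
Proof.
move=> _ [spos soo].
pose H (N k M : nat) := Gs xs s N (k.+1%:R^-1) `&`
  [set x | forall m, exists2 n, (m <= n)%N & s n * `|xs n - x| < M%:R].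
have Hn : (@lebesgue_measure R).-negligible (\bigcup_N \bigcup_k \bigcup_M H N k M).
  apply: negligible_bigcup => N; apply: negligible_bigcup => k.
  apply: negligible_bigcup => M.
  have L : (@lebesgue_measure R).-negligible (~` [set x | (lebesgue_measure (Gs xs s N (k.+1%:R^-1) `&` ball x r) *
      (lebesgue_measure (ball x r))^-1)%E @[r --> 0^'+] --> (\1_(Gs xs s N (k.+1%:R^-1)) x)%:E]).
    exact: (lebesgue_density (@Gs_measurable R xs s spos N (k.+1%:R^-1))).
  apply: (negligibleS _ L).
  move=> x [Gx io] /= Hd.
  apply: (@not_density R xs s spos N _ x M%:R _ soo Gx io Hd).
  by rewrite invr_gt0.
apply: (negligibleS _ Hn).
move=> x [_ /= [w0 woo]].
pose u := (fun n => (s n * `|xs n - x|)%:E) : (\bar R)^nat.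
have om : omega xs s x = limn_einf u by [].
have u0 : forall n, (0 <= u n)%E by move=> n; rewrite /u lee_fin mulr_ge0 // ltW.
have oge0 : (0 <= omega xs s x)%E by rewrite om; exact: limn_einf_ge0.
have ofin : omega xs s x \is a fin_num.
  by rewrite ge0_fin_numE// ltey; apply/eqP.
set w := fine (omega xs s x).
have ow : omega xs s x = w%:E by rewrite fineK.
have wpos : 0 < w.
  rewrite lt_def; apply/andP; split; last by rewrite -lee_fin -ow.
  by apply/eqP => w0'; apply: w0; rewrite ow w0'.
pose k := Num.Def.trunc (w^-1).
have kw : k.+1%:R^-1 < w.
  have h := truncnS_gt (w^-1).
  by rewrite -(invrK w) ltf_pV2 ?posrE ?invr_gt0.
have [N HN] := @limn_einf_gt_ev R u (k.+1%:R^-1)%:E ltac:(by rewrite -om ow lte_fin).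
pose M := (Num.Def.trunc w).+1.
have io := @limn_einf_lt_io R u (M%:R)%:E ltac:(by rewrite -om ow lte_fin truncnS_gt).
exists N => //; exists k => //; exists M => //; split.
- by move=> n Nn; apply: ltW; have := HN n Nn; rewrite lte_fin.
- by move=> m; have [n mn] := io m; exists n => //; rewrite -lte_fin.
Qed.
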